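(* In the setting below, if $S_1,S_2\in\mathrm{Lin}(\mathcal{C}_1,\mathcal{C}_2)^\tau$, then there exists $R\ge 0$ such that $d_{\mathcal{C}_2}(S_1(x),S_2(x))\le R$ for all $x\in\mathcal{C}_1$.
   Context: Let $M_i=\Gamma_i\backslash\Omega_i$ ($i=1,2$) be compact proper convex real projective manifolds ($\Omega_i\subset\mathbb{P}(\mathbb{R}^{d_i+1})$ proper convex open, $\Gamma_i$ discrete acting properly discontinuously, freely, cocompactly). Let $\mathcal{C}_i$ be a component of the preimage of $\Omega_i$ in $\mathbb{R}^{d_i+1}\setminus\{0\}$ (a convex open cone containing no affine line), $\overline\Gamma_i=\{\gamma\in\mathrm{GL}_{d_i+1}(\mathbb{R}):|\det\gamma|=1,\gamma\mathcal{C}_i=\mathcal{C}_i,[\gamma]\in\Gamma_i\}$ and $\Lambda_i=\langle\overline\Gamma_i,e\,\mathrm{Id}\rangle$, a discrete group acting cocompactly on $\mathcal{C}_i$. Let $\tau:\Lambda_1\to\Lambda_2$ be a homomorphism. $\mathrm{Lin}(\mathcal{C}_1,\mathcal{C}_2)^\tau$ is the set of linear maps $S:\mathbb{R}^{d_1+1}\to\mathbb{R}^{d_2+1}$ with $S(\mathcal{C}_1)\subset\mathcal{C}_2$ and $S\circ\phi=\tau(\phi)\circ S$ for all $\phi\in\Lambda_1$. Viewing $\mathbb{R}^{d_2+1}$ as an affine chart of $\mathbb{P}(\mathbb{R}^{d_2+2})$, $\mathcal{C}_2$ is a proper convex open set and $d_{\mathcal{C}_2}$ is its Hilbert metric: $d(x,y)=\log\frac{|x-b||y-a|}{|x-a||y-b|}$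 where $a,b$ are the boundary points (possibly at infinity) on the line through $x,y$, ordered $a,x,y,b$. *)

(* Defs.v *)
From HB Require Import structures.
From Stdlib Require Import Reals Lra ClassicalEpsilon FunctionalExtensionality.
From mathcomp Require Import all_boot all_algebra.
Set Implicit Arguments. Unset Strict Implicit. Unset Printing Implicit Defensive.

Definition Reqb (x y : R) : bool := if Req_EM_T x y then true else false.
Lemma R_eqP : Equality.axiom Reqb.
Proof. by move=> x y; rewrite /Reqb; case: Req_EM_T => H; constructor. Qed.
HB.instance Definition _ := hasDecEq.Build R R_eqP.

Definition R_find (P : pred R) (_ : nat) : option R :=
  match excluded_middle_informative (exists x, P x) with
  | left H => Some (proj1_sig (constructive_indefinite_description _ H))
  | right _ => None end.
Lemma R_find_some P n x : R_find P n = Some x -> P x.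
Proof. rewrite /R_find; case: excluded_middle_informative => // H [<-].
by case: constructive_indefinite_description. Qed.
Lemma R_find_ex (P : pred R) : (exists x, P x) -> exists n, R_find P n.
Proof. by move=> H; exists 0%N; rewrite /R_find; case: excluded_middle_informative. Qed.
Lemma R_find_ext (P Q : pred R) : P =1 Q -> R_find P =1 R_find Q.
Proof. by move=> /functional_extensionality ->. Qed.
HB.instance Definition _ := hasChoice.Build R R_find_some R_find_ex R_find_ext.

Lemma R_addA : associative Rplus. Proof. by move=> *; ring. Qed.
Lemma R_addC : commutative Rplus. Proof. by move=> *; ring. Qed.
Lemma R_add0 : left_id R0 Rplus. Proof. by move=> *; ring. Qed.
Lemma R_addN : left_inverse R0 Ropp Rplus. Proof. by move=> *; ring. Qed.
HB.instance Definition _ := @GRing.isZmodule.Build R R0 Ropp Rplus R_addA R_addC R_add0 R_addN.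
Lemma R_mulA : associative Rmult. Proof. by move=> *; ring. Qed.
Lemma R_mulC : commutative Rmult. Proof. by move=> *; ring. Qed.
Lemma R_mul1 : left_id R1 Rmult. Proof. by move=> *; ring. Qed.
Lemma R_mulDl : left_distributive Rmult Rplus. Proof. by move=> *; ring. Qed.
Lemma R_one0 : (R1 != R0 :> R). Proof. by apply/eqP; exact R1_neq_R0. Qed.
HB.instance Definition _ := @GRing.Zmodule_isComNzRing.Build R R1 Rmult R_mulA R_mulC R_mul1 R_mulDl R_one0.
Lemma R_mulVf (x : R) : x != R0 -> Rmult (Rinv x) x = R1.
Proof. by move/eqP=> H; apply: Rinv_l. Qed.
HB.instance Definition _ := @GRing.ComNzRing_isField.Build R Rinv R_mulVf Rinv_0.


Local Open Scope ring_scope.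

Definition supnorm n (x : 'cV[R]_n) : R := \big[Rmax/R0]_(i < n) Rabs (x i 0).

(* Euclidean-topology notions on R^n (any norm gives the same topology). *)
Definition open_set n (C : 'cV[R]_n -> Prop) : Prop :=
  forall x, C x -> exists eps, Rlt R0 eps /\
    forall y, Rlt (supnorm (y - x)) eps -> C y.

Definition closed_set n (K : 'cV[R]_n -> Prop) : Prop :=
  forall (u : nat -> 'cV[R]_n) (l : 'cV[R]_n),
    (forall k, K (u k)) -> (forall i j, Un_cv (fun k => u k i j) (l i j)) -> K l.

(* C is a convex open cone containing no affine line (the component of the
   preimage of a proper convex open set Omega = P(C) of P(R^n)). *)
Record proper_convex_open_cone n (C : 'cV[R]_n -> Prop) : Prop := {
  pcc_nonempty : exists x, C x;
  pcc_open : open_set C;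
  pcc_convex : forall x y t, C x -> C y -> Rle R0 t -> Rle t R1 ->
                 C ((R1 - t) *: x + t *: y);
  pcc_cone : forall x lam, C x -> Rlt R0 lam -> C (lam *: x);
  pcc_noline : ~ (exists p v : 'cV[R]_n, v != 0 /\ forall t, C (p + t *: v))
}.

(* A subgroup Gamma of PGL_n(R), given by its full preimage [Gam] in GL_n(R):
   [Gam g] means [g] \in Gamma. *)
Record pgl_subgroup n (Gam : 'M[R]_n.+1 -> Prop) : Prop := {
  pgl_unit : forall g, Gam g -> g \in unitmx;
  pgl_one : Gam 1%:M;
  pgl_mul : forall g h, Gam g -> Gam h -> Gam (g *m h);
  pgl_inv : forall g, Gam g -> Gam (invmx g);
  pgl_scale : forall g c, Gam g -> c != 0 -> Gam (c *: g)
}.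

(* Gamma preserves Omega = P(C): the preimage of Omega is C \cup -C. *)
Definition preserves_Omega n (C : 'cV[R]_n.+1 -> Prop) (Gam : 'M[R]_n.+1 -> Prop) :=
  forall g x, Gam g -> C x -> C (g *m x) \/ C (- (g *m x)).

Definition discrete_pgl n (Gam : 'M[R]_n.+1 -> Prop) : Prop :=
  exists eps, Rlt R0 eps /\
    forall g, Gam g -> (forall i j, Rlt (Rabs (g i j - (1%:M : 'M[R]_n.+1) i j)) eps) ->
      exists c, g = c%:M.

Definition Gbar n (C : 'cV[R]_n.+1 -> Prop) (Gam : 'M[R]_n.+1 -> Prop) (g : 'M[R]_n.+1) : Prop :=
  Gam g /\ Rabs (\det g) = R1 /\ (forall x, C (g *m x) <-> C x).

(* Subsets of Omega = P(C) are represented by subsets K of C saturated under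
   positive scaling; K is compact in P(R^n) iff its trace on the unit sphere
   (for the sup norm) is compact, i.e. closed. *)
Definition compact_in_Omega n (C K : 'cV[R]_n -> Prop) : Prop :=
  (forall x, K x -> C x) /\
  (forall x lam, K x -> Rlt R0 lam -> K (lam *: x)) /\
  closed_set (fun x => K x /\ supnorm x = R1).

(* The action of Gamma on Omega is properly discontinuous, free and cocompact
   (expressed through the lifts \overline\Gamma, which are in bijection with Gamma). *)
Definition properly_discontinuous n (C : 'cV[R]_n.+1 -> Prop) (Gam : 'M[R]_n.+1 -> Prop) :=
  forall K, compact_in_Omega C K ->
    exists l : seq 'M[R]_n.+1,
      forall g, Gbar C Gam g -> (exists x, K x /\ K (g *m x)) -> g \in l.

Definition acts_freely n (C : 'cV[R]_n.+1 -> Prop) (Gam : 'M[R]_n.+1 -> Prop) :=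
  forall g x, Gbar C Gam g -> C x ->
    (exists lam, Rlt R0 lam /\ g *m x = lam *: x) -> exists c, g = c%:M.

Definition acts_cocompactly n (C : 'cV[R]_n.+1 -> Prop) (Gam : 'M[R]_n.+1 -> Prop) :=
  exists K, compact_in_Omega C K /\
    forall x, C x -> exists g y, Gbar C Gam g /\ K y /\ g *m y = x.

Record compact_convex_proj_manifold d (C : 'cV[R]_d.+1 -> Prop) (Gam : 'M[R]_d.+1 -> Prop) : Prop := {
  ccpm_cone : proper_convex_open_cone C;
  ccpm_group : pgl_subgroup Gam;
  ccpm_preserves : preserves_Omega C Gam;
  ccpm_discrete : discrete_pgl Gam;
  ccpm_propdisc : properly_discontinuous C Gam;
  ccpm_free : acts_freely C Gam;
  ccpm_cocompact : acts_cocompactly C Gam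
}.

Inductive gen_group n (A : 'M[R]_n.+1 -> Prop) : 'M[R]_n.+1 -> Prop :=
  | gen_base g : A g -> gen_group A g
  | gen_one : gen_group A 1%:M
  | gen_mul g h : gen_group A g -> gen_group A h -> gen_group A (g *m h)
  | gen_inv g : gen_group A g -> gen_group A (invmx g).

Definition Lambda n (C : 'cV[R]_n.+1 -> Prop) (Gam : 'M[R]_n.+1 -> Prop) : 'M[R]_n.+1 -> Prop :=
  gen_group (fun g => Gbar C Gam g \/ g = (exp R1)%:M).

Definition group_hom n1 n2 (L1 : 'M[R]_n1.+1 -> Prop) (L2 : 'M[R]_n2.+1 -> Prop)
    (tau : 'M[R]_n1.+1 -> 'M[R]_n2.+1) : Prop :=
  (forall g, L1 g -> L2 (tau g)) /\
  (forall g h, L1 g -> L1 h -> tau (g *m h) = tau g *m tau h).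

Definition Lin_tau n1 n2 (C1 : 'cV[R]_n1.+1 -> Prop) (C2 : 'cV[R]_n2.+1 -> Prop)
    (L1 : 'M[R]_n1.+1 -> Prop) (tau : 'M[R]_n1.+1 -> 'M[R]_n2.+1)
    (S : 'M[R]_(n2.+1, n1.+1)) : Prop :=
  (forall x, C1 x -> C2 (S *m x)) /\
  (forall phi, L1 phi -> S *m phi = tau phi *m S).

(* supremum in R of a set of reals, None if it has no least upper bound
   (for the nonempty sets used below: None means +infinity) *)
Definition Rsup_opt (E : R -> Prop) : option R :=
  match excluded_middle_informative (exists l, is_lub E l) with
  | left H => Some (proj1_sig (constructive_indefinite_description _ H))
  | right _ => None
  end.

(* Hilbert metric of a convex open set C of the affine space R^n:
   d(x,y) = log (|x-b||y-a| / (|x-a||y-b|)), a, b the boundary points of the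
   line through x, y, ordered a, x, y, b (possibly at infinity).  Parametrising
   the line as p t = x + t (y - x), b = p tb, a = p (-sa) with tb > 1, sa > 0:
   d = log (tb/(tb-1)) + log ((1+sa)/sa), a term being 0 when the
   corresponding boundary point is at infinity. *)
Definition hilbert_dist n (C : 'cV[R]_n -> Prop) (x y : 'cV[R]_n) : R :=
  if x == y then R0 else
  let p := fun t : R => x + t *: (y - x) in
  let fb := match Rsup_opt (fun t => C (p t)) with
            | Some tb => Rdiv tb (Rminus tb R1) | None => R1 end in
  let fa := match Rsup_opt (fun s => C (p (Ropp s))) with
            | Some sa => Rdiv (Rplus R1 sa) sa | None => R1 end in
  Rplus (ln fb) (ln fa).

(* Main.v *)
Require Import Defs.
From HB Require Import structures.
From Stdlib Require Import Reals Lra Classical ClassicalEpsilon FunctionalExtensionality PropExtensionality.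
From mathcomp Require Import all_boot all_algebra.
From Coquelicot Require Compactness.
Import GRing.Theory.
Local Open Scope ring_scope.

Lemma RaddE (x y : R) : x + y = Rplus x y. Proof. by []. Qed.
Lemma RoppE (x : R) : - x = Ropp x. Proof. by []. Qed.
Lemma RmulE (x y : R) : x * y = Rmult x y. Proof. by []. Qed.
Lemma R0E : (0 : R) = R0. Proof. by []. Qed.
Lemma R1E : (1 : R) = R1. Proof. by []. Qed.
Lemma RinvE (x : R) : x^-1 = Rinv x. Proof. by []. Qed.

Section BigMax.
Variable I : eqType.
Implicit Types (s : seq I) (F : I -> R).

Lemma bmax_ge s F i : i \in s -> Rle (F i) (\big[Rmax/R0]_(j <- s) F j).
Proof.
elim: s => //= a s IH; rewrite inE big_cons; case/orP => [/eqP->|/IH h].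
  exact: Rmax_l.
apply: Rle_trans h _; exact: Rmax_r.
Qed.

Lemma bmax_le s F d : Rle R0 d -> (forall j, j \in s -> Rle (F j) d) ->
  Rle (\big[Rmax/R0]_(j <- s) F j) d.
Proof.
move=> d0; elim: s => [|a s IH] h; first by rewrite big_nil.
rewrite big_cons; apply: Rmax_lub; first by apply: h; rewrite inE eqxx.
by apply: IH => j js; apply: h; rewrite inE js orbT.
Qed.

Lemma bmax_lt s F d : Rlt R0 d -> (forall j, j \in s -> Rlt (F j) d) ->
  Rlt (\big[Rmax/R0]_(j <- s) F j) d.
Proof.
move=> d0; elim: s => [|a s IH] h; first by rewrite big_nil.
rewrite big_cons; apply: Rmax_lub_lt; first by apply: h; rewrite inE eqxx.
by apply: IH => j js; apply: h; rewrite inE js orbT.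
Qed.

Lemma bmax_ge0 s F : Rle R0 (\big[Rmax/R0]_(j <- s) F j).
Proof.
elim: s => [|a s IH]; first by rewrite big_nil; apply: Rle_refl.
rewrite big_cons; apply: Rle_trans IH _; exact: Rmax_r.
Qed.

Lemma bmax_scale s F c : Rle R0 c ->
  \big[Rmax/R0]_(j <- s) Rmult c (F j) = Rmult c (\big[Rmax/R0]_(j <- s) F j).
Proof.
move=> c0; elim: s => [|a s IH]; first by rewrite !big_nil Rmult_0_r.
by rewrite !big_cons IH RmaxRmult.
Qed.
End BigMax.


Section Supnorm.
Variable n : nat.
Implicit Types (u v : 'cV[R]_n).

Lemma sn_ge v i : Rle (Rabs (v i 0)) (supnorm v).
Proof.
have := @bmax_ge _ (index_enum 'I_n) (fun i => Rabs (v i 0)) i.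
by rewrite mem_index_enum => h; apply: h.
Qed.

Lemma sn_le v d : Rle R0 d -> (forall i, Rle (Rabs (v i 0)) d) -> Rle (supnorm v) d.
Proof.
move=> d0 h; have := @bmax_le _ (index_enum 'I_n) (fun i => Rabs (v i 0)) d d0.
by move=> h'; apply: h' => j _; apply: h.
Qed.

Lemma sn_lt v d : Rlt R0 d -> (forall i, Rlt (Rabs (v i 0)) d) -> Rlt (supnorm v) d.
Proof.
move=> d0 h; have := @bmax_lt _ (index_enum 'I_n) (fun i => Rabs (v i 0)) d d0.
by move=> h'; apply: h' => j _; apply: h.
Qed.

Lemma sn_ge0 v : Rle R0 (supnorm v).
Proof. by have := @bmax_ge0 _ (index_enum 'I_n) (fun i => Rabs (v i 0)). Qed.

Lemma sn_scale c v : supnorm (c *: v) = Rmult (Rabs c) (supnorm v).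
Proof.
have := @bmax_scale _ (index_enum 'I_n) (fun i => Rabs (v i 0)) (Rabs c) (Rabs_pos c).
rewrite /supnorm => <-.
by apply: eq_bigr => i _; rewrite mxE Rabs_mult.
Qed.

Lemma sn_triang u v : Rle (supnorm (u + v)) (Rplus (supnorm u) (supnorm v)).
Proof.
apply: sn_le.
  by apply: Rplus_le_le_0_compat; apply: sn_ge0.
move=> i; rewrite mxE; apply: Rle_trans (Rabs_triang _ _) _.
by apply: Rplus_le_compat; apply: sn_ge.
Qed.

Lemma sn_eq0 v : supnorm v = R0 -> v = 0.
Proof.
move=> h; apply/matrixP => i j; rewrite ord1 mxE.
have := sn_ge v i; rewrite h => h1.
have := Rabs_pos (v i 0) => h2.
by case: (Req_dec (v i 0) R0) => // /Rabs_no_R0 []; apply: Rle_antisym.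
Qed.

Lemma sn_opp v : supnorm (- v) = supnorm v.
Proof. by rewrite /supnorm; apply: eq_bigr => i _; rewrite mxE Rabs_Ropp. Qed.
End Supnorm.

Section BigSum.
Variable I : eqType.
Implicit Types (s : seq I) (F G : I -> R).

Lemma bsum_abs s F : Rle (Rabs (\sum_(j <- s) F j)) (\sum_(j <- s) Rabs (F j)).
Proof.
elim: s => [|a s IH]; first by rewrite !big_nil Rabs_R0; apply: Rle_refl.
rewrite !big_cons; apply: Rle_trans (Rabs_triang _ _) _.
by apply: Rplus_le_compat => //; apply: Rle_refl.
Qed.

Lemma bsum_le s F G : (forall j, Rle (F j) (G j)) ->
  Rle (\sum_(j <- s) F j) (\sum_(j <- s) G j).
Proof.
move=> h; elim: s => [|a s IH]; first by rewrite !big_nil; apply: Rle_refl.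
by rewrite !big_cons; apply: Rplus_le_compat.
Qed.

Lemma bsum_ge0 s F : (forall j, Rle R0 (F j)) -> Rle R0 (\sum_(j <- s) F j).
Proof.
move=> h; elim: s => [|a s IH]; first by rewrite !big_nil; apply: Rle_refl.
by rewrite !big_cons; apply: Rplus_le_le_0_compat.
Qed.

Lemma bsum_ge s F i : (forall j, Rle R0 (F j)) -> i \in s ->
  Rle (F i) (\sum_(j <- s) F j).
Proof.
move=> h; elim: s => [|a s IH] //; rewrite inE big_cons; case/orP => [/eqP->|/IH h'].
  have := @bsum_ge0 s F h => h2; rewrite RaddE.
  by rewrite -{1}(Rplus_0_r (F a)); apply: Rplus_le_compat_l.
have := h a => h2; rewrite RaddE -(Rplus_0_l (F i)).
by apply: Rplus_le_compat.
Qed.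
End BigSum.

Lemma lipschitz m n (A : 'M[R]_(m, n)) : exists L, Rlt R0 L /\
  forall z, Rle (supnorm (A *m z)) (Rmult L (supnorm z)).
Proof.
set T := \sum_(i <- index_enum 'I_m) \sum_(j <- index_enum 'I_n) Rabs (A i j).
have T0 : Rle R0 T.
  by apply: bsum_ge0 => i; apply: bsum_ge0 => j; apply: Rabs_pos.
exists (Rplus R1 T); split; first lra.
move=> z; apply: sn_le.
  by apply: Rmult_le_pos; [lra | apply: sn_ge0].
move=> i; rewrite mxE.
apply: Rle_trans (@bsum_abs _ (index_enum 'I_n) (fun j => A i j * z j 0)) _.
apply: (@Rle_trans _ (\sum_(j <- index_enum 'I_n) (Rabs (A i j) * supnorm z))).
  apply: (@bsum_le _ (index_enum 'I_n) (fun j => Rabs (A i j * z j 0))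
     (fun j => Rabs (A i j) * supnorm z)) => j.
  rewrite RmulE Rabs_mult; apply: Rmult_le_compat_l.
    exact: Rabs_pos.
  exact: sn_ge.
rewrite -mulr_suml RmulE; apply: Rmult_le_compat_r; first exact: sn_ge0.
have := @bsum_ge _ (index_enum 'I_m) (fun i => \sum_(j <- index_enum 'I_n) Rabs (A i j)) i.
rewrite mem_index_enum => h.
have {}h := h (fun i => bsum_ge0 _ _ (fun j => Rabs (A i j)) (fun j => Rabs_pos _)) isT.
rewrite -/T in h; apply: (Rle_trans _ _ _ h); lra.
Qed.

Fixpoint mkT (m : nat) (g : nat -> R) : Compactness.Tn m R :=
  match m with O => tt | S k => (g O, mkT k (fun j => g (S j))) end.
Fixpoint ofT (m : nat) : Compactness.Tn m R -> nat -> R :=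
  match m with
  | O => fun _ _ => R0
  | S k => fun t j => match j with O => fst t | S j' => ofT k (snd t) j' end
  end.

Lemma mkT_of m t : mkT m (ofT m t) = t.
Proof.
elim: m t => [[]|m IH [x r]] //=.
by congr (_, _); exact: IH.
Qed.

Lemma close_mk m d g h : Compactness.close_n m d (mkT m g) (mkT m h) <->
  forall j, (j < m)%N -> Rlt (Rabs (Rminus (g j) (h j))) d.
Proof.
elim: m g h => [|m IH] g h /=; first by split.
rewrite IH; split.
  by case=> h0 hs [|j] //= hj; apply: hs.
by move=> hh; split; [apply: hh | move=> j hj; apply: hh].
Qed.

Lemma bounded_mk m ga gb g : Compactness.bounded_n m (mkT m ga) (mkT m gb) (mkT m g) <->
  forall j, (j < m)%N -> Rle (ga j) (g j) /\ Rle (g j) (gb j).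
Proof.
elim: m ga gb g => [|m IH] ga gb g /=; first by split.
rewrite IH; split.
  by case=> h0 hs [|j] //= hj; apply: hs.
by move=> hh; split; [apply: hh | move=> j hj; apply: hh].
Qed.

Lemma ball_cover n (P : 'cV[R]_n.+1 -> Prop) : Defs.closed_set P ->
  (forall y, P y -> Rle (supnorm y) R1) ->
  forall r : 'cV[R]_n.+1 -> R, (forall t, Rlt R0 (r t)) ->
  exists l : seq 'cV[R]_n.+1, forall y, P y ->
    exists t, List.In t l /\ P t /\ Rlt (supnorm (y - t)) (r t).
Proof.
move=> hcl hb r rpos.
have hrho : forall v, exists rho, Rlt R0 rho /\ (P v -> rho = r v) /\
    (~ P v -> forall y, Rlt (supnorm (y - v)) rho -> ~ P y).
  move=> v; case: (classic (P v)) => Pv.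
    by exists (r v); split; [apply: rpos | split].
  apply: NNPP => hn; apply: (Pv).
  have hk : forall k : nat, exists y, Rlt (supnorm (y - v)) (Rinv (Rplus (INR k) R1)) /\ P y.
    move=> k; apply: NNPP => hk; apply: hn; exists (Rinv (Rplus (INR k) R1)); split.
      apply: Rinv_0_lt_compat; have := pos_INR k; lra.
    split; first by move/Pv.
    by move=> _ y hy Py; apply: hk; exists y.
  pose u k := proj1_sig (constructive_indefinite_description _ (hk k)).
  have hu k : Rlt (supnorm (u k - v)) (Rinv (Rplus (INR k) R1)) /\ P (u k).
    by rewrite /u; case: constructive_indefinite_description.
  apply: (hcl u v); first by move=> k; case: (hu k).
  move=> i j eps heps; rewrite ord1.
  case: (archimed_cor1 eps heps) => N [hN N0].
  exists N => k hkN; rewrite /Rdist.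
  have h1 := sn_ge _ (u k - v) i; rewrite !mxE in h1.
  case: (hu k) => h2 _.
  have h3 : Rle (Rinv (Rplus (INR k) R1)) (Rinv (INR N)).
    apply: Rinv_le_contravar; first by apply: lt_0_INR.
    have := le_INR _ _ hkN; lra.
  apply: Rle_lt_trans h1 _; lra.
pose rho v := proj1_sig (constructive_indefinite_description _ (hrho v)).
have hr v : Rlt R0 (rho v) /\ (P v -> rho v = r v) /\
    (~ P v -> forall y, Rlt (supnorm (y - v)) (rho v) -> ~ P y).
  by rewrite /rho; case: constructive_indefinite_description.
pose vofT (t : Compactness.Tn n.+1 R) : 'cV[R]_n.+1 := \col_(i < n.+1) ofT n.+1 t i.
pose delta t := mkposreal (rho (vofT t)) (proj1 (hr (vofT t))).
have hc := Compactness.compactness_list n.+1 (mkT n.+1 (fun _ => Ropp R1))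
  (mkT n.+1 (fun _ => R1)) delta.
apply: NNPP => hn; apply: hc => -[l hl]; apply: hn.
exists (List.map vofT l) => y Py.
have hby : Compactness.bounded_n n.+1 (mkT n.+1 (fun _ => Ropp R1))
  (mkT n.+1 (fun _ => R1)) (mkT n.+1 (fun j => y (inord j) 0)).
  apply/bounded_mk => j _.
  have h1 := sn_ge _ y (inord j); have h2 := hb y Py.
  have h3 := Rle_abs (y (inord j) 0); have h4 := Rle_abs (Ropp (y (inord j) 0)).
  rewrite Rabs_Ropp in h4; lra.
case: (hl _ hby) => t [tl [_ ht]].
have ht' : forall j, (j < n.+1)%N ->
    Rlt (Rabs (Rminus (y (inord j) 0) (ofT n.+1 t j))) (rho (vofT t)).
  by move: ht; rewrite -[X in Compactness.close_n _ _ _ X](mkT_of n.+1 t) close_mk.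
have hs : Rlt (supnorm (y - vofT t)) (rho (vofT t)).
  apply: sn_lt; first by case: (hr (vofT t)).
  move=> i; rewrite !mxE; have := ht' i (ltn_ord i); rewrite inord_val.
  by [].
case: (classic (P (vofT t))) => Pt.
  exists (vofT t); split; first exact: List.in_map.
  by split => //; case: (hr (vofT t)) => _ [<-].
by case: (hr (vofT t)) => _ [_ /(_ Pt y hs)].
Qed.

Section RealFacts.
Local Open Scope R_scope.

Lemma ln_le' x y : 0 < x -> x <= y -> ln x <= ln y.
Proof.
move=> x0 [h|->]; last by apply: Rle_refl.
by apply: Rlt_le; apply: ln_increasing.
Qed.

Lemma ln_ge0 x : 1 <= x -> 0 <= ln x.
Proof. by move=> h; rewrite -ln_1; apply: ln_le'; [lra|]. Qed.

Lemma lnb a d K : 0 < d -> d <= a -> / d <= K -> ln (Rdiv (Rplus R1 a) a) <= ln (Rplus R1 K).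
Proof.
move=> d0 da dK.
have a0 : 0 < a by lra.
have e : Rdiv (Rplus R1 a) a = 1 + / a by field; lra.
rewrite e; apply: ln_le'.
  have := Rinv_0_lt_compat a a0; lra.
have := Rinv_le_contravar d a d0 da; lra.
Qed.

Lemma lnb' tb d K : 0 < d -> Rplus R1 d <= tb -> / d <= K -> ln (Rdiv tb (Rminus tb R1)) <= ln (Rplus R1 K).
Proof.
move=> d0 h hK.
have e : Rdiv tb (Rminus tb R1) = Rdiv (Rplus R1 (tb - 1)) (tb - 1).
  by rewrite /Rminus; congr Rdiv; ring.
rewrite e; apply: (@lnb (tb - 1) d K d0) => //; lra.
Qed.
End RealFacts.



Lemma Rsup_opt_spec E r : Rsup_opt E = Some r -> is_lub E r.
Proof.
rewrite /Rsup_opt; case: excluded_middle_informative => // H [<-].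
by case: constructive_indefinite_description.
Qed.

Lemma eqR (a b : R) : a = b -> a = b. Proof. by []. Qed.

Lemma vec_id1 n (u v : 'cV[R]_n) t : u + t *: (v - u) - v = (t - 1) *: (v - u).
Proof. by rewrite scalerBl scale1r opprB addrA [_ + u]addrC. Qed.

Lemma vec_id2 n (u v : 'cV[R]_n) t : u + t *: (v - u) - u = t *: (v - u).
Proof. by rewrite addrAC subrr add0r. Qed.

Lemma hd_inv n (C : 'cV[R]_n -> Prop) (g : 'M[R]_n) u v B :
  (forall x, C (g *m x) <-> C x) -> Rle R0 B ->
  Rle (hilbert_dist C u v) B -> Rle (hilbert_dist C (g *m u) (g *m v)) B.
Proof.
move=> hg B0 huv; rewrite /hilbert_dist in huv *.
case: (g *m u =P g *m v) => [_ //|hne].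
have e0 : (u == v) = false by apply/eqP => e; apply: hne; rewrite e.
rewrite e0 in huv.
have e1 : (fun t => C (g *m u + t *: (g *m v - g *m u))) = (fun t => C (u + t *: (v - u))).
  apply: functional_extensionality => t; apply: propositional_extensionality.
  by rewrite -mulmxBr scalemxAr -mulmxDr.
have e2 : (fun t => C (g *m u + (Ropp t) *: (g *m v - g *m u))) =
          (fun t => C (u + (Ropp t) *: (v - u))).
  apply: functional_extensionality => t; apply: propositional_extensionality.
  by rewrite -mulmxBr scalemxAr -mulmxDr.
by rewrite /= e1 e2 in huv *.
Qed.

Lemma hd_bound n (C : 'cV[R]_n -> Prop) u v eps M :
  Rlt R0 eps -> Rlt R0 M ->
  (forall w, Rlt (supnorm (w - u)) eps -> C w) ->
  (forall w, Rlt (supnorm (w - v)) eps -> C w) ->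
  Rle (supnorm (v - u)) M ->
  Rle (hilbert_dist C u v)
    (Rplus (ln (Rplus R1 (Rdiv (Rmult (Rplus R1 R1) M) eps))) (ln (Rplus R1 (Rdiv (Rmult (Rplus R1 R1) M) eps)))).
Proof.
move=> e0 M0 hu hv hM.
set K := Rdiv (Rmult (Rplus R1 R1) M) eps.
have K0 : Rle R0 K.
  rewrite /K /Rdiv; apply: Rmult_le_pos; first lra.
  by apply: Rlt_le; apply: Rinv_0_lt_compat.
have lnK : Rle R0 (ln (Rplus R1 K)) by apply: ln_ge0; lra.
rewrite /hilbert_dist; case: eqP => [_|hne].
  lra.
set m := supnorm (v - u).
have m0 : Rlt R0 m.
  case: (sn_ge0 _ (v - u)) => // /esym /sn_eq0 h; exfalso; apply: hne.
  by apply/eqP; rewrite eq_sym -subr_eq0; apply/eqP.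
set d := Rdiv eps (Rmult (Rplus R1 R1) m).
have d0 : Rlt R0 d.
  rewrite /d /Rdiv; apply: Rmult_lt_0_compat => //.
  apply: Rinv_0_lt_compat; lra.
have dK : Rle (Rinv d) K.
  have -> : Rinv d = Rdiv (Rmult (Rplus R1 R1) m) eps by rewrite /d; field; lra.
  rewrite /K /Rdiv; apply: Rmult_le_compat_r.
    by apply: Rlt_le; apply: Rinv_0_lt_compat.
  apply: Rmult_le_compat_l; [lra | exact: hM].
have dm : Rlt (Rmult d m) eps.
  have -> : Rmult d m = Rdiv eps (Rplus R1 R1) by rewrite /d; field; lra.
  lra.
rewrite /=; apply: Rplus_le_compat.
  case E: Rsup_opt => [tb|]; last by rewrite ln_1.
  have [ub _] := Rsup_opt_spec _ _ E.
  have h : Rle (Rplus R1 d) tb.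
    apply: ub; apply: hv.
    rewrite vec_id1 sn_scale -/m.
    have -> : Rplus R1 d - 1 = d by change (Rplus R1 d) with (1 + d); rewrite [1 + d]addrC addrK.
    by rewrite Rabs_right; last lra.
  exact: (lnb' _ _ _ d0 h dK).
case E: Rsup_opt => [sa|]; last by rewrite ln_1.
have [ub _] := Rsup_opt_spec _ _ E.
have h : Rle d sa.
  apply: ub; apply: hu.
  rewrite vec_id2 sn_scale -/m Rabs_Ropp.
  by rewrite Rabs_right; last lra.
exact: (lnb _ _ _ d0 h dK).
Qed.

Lemma cone_iff n (C : 'cV[R]_n -> Prop) (c : R) x :
  proper_convex_open_cone C -> Rlt R0 c -> C (c *: x) <-> C x.
Proof.
move=> hc c0; split => h; last exact: (pcc_cone hc).
have c0' : c != 0 by apply/eqP => e; rewrite e in c0; apply: (Rlt_irrefl R0).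
have := pcc_cone hc h (Rinv_0_lt_compat _ c0).
by rewrite scalerA -RinvE mulVf // scale1r.
Qed.

Lemma lam_inv d (C : 'cV[R]_d.+1 -> Prop) Gam : proper_convex_open_cone C ->
  forall g, Lambda C Gam g -> forall x, C (g *m x) <-> C x.
Proof.
move=> hc g; rewrite /Lambda; elim => {g}.
- move=> g [[_ [_ h]] | ->] x; first exact: h.
  by rewrite mul_scalar_mx; apply: cone_iff => //; apply: exp_pos.
- by move=> x; rewrite mul1mx.
- by move=> g h _ hg _ hh x; rewrite -mulmxA hg hh.
- move=> g _ hg x; case: (boolP (g \in unitmx)) => gu.
    by rewrite -hg mulKVmx.
  by rewrite invmx_out.
Qed.

Lemma list_min (A : Type) (f : A -> R) (l : list A) : (forall t, Rlt R0 (f t)) ->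
  exists eps, Rlt R0 eps /\ forall t, List.In t l -> Rle eps (f t).
Proof.
move=> hf; elim: l => [|a l [e [e0 he]]].
  by exists R1; split => //; apply: Rlt_0_1.
exists (Rmin (f a) e); split; first by apply: Rmin_pos.
move=> t [<-|tl]; first exact: Rmin_l.
apply: Rle_trans (Rmin_r _ _) _; exact: he.
Qed.

Theorem lemma7p3 (d1 d2 : nat)
    (C1 : 'cV[R]_d1.+1 -> Prop) (Gam1 : 'M[R]_d1.+1 -> Prop)
    (C2 : 'cV[R]_d2.+1 -> Prop) (Gam2 : 'M[R]_d2.+1 -> Prop)
    (tau : 'M[R]_d1.+1 -> 'M[R]_d2.+1)
    (hM1 : compact_convex_proj_manifold C1 Gam1)
    (hM2 : compact_convex_proj_manifold C2 Gam2)
    (htau : group_hom (Lambda C1 Gam1) (Lambda C2 Gam2) tau)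
    (S1 S2 : 'M[R]_(d2.+1, d1.+1))
    (hS1 : Lin_tau C1 C2 (Lambda C1 Gam1) tau S1)
    (hS2 : Lin_tau C1 C2 (Lambda C1 Gam1) tau S2) :
  exists Rb : R, Rle R0 Rb /\
    forall x : 'cV[R]_d1.+1, C1 x -> Rle (hilbert_dist C2 (S1 *m x) (S2 *m x)) Rb.
Proof.
have hc1 := ccpm_cone hM1; have hc2 := ccpm_cone hM2.
case: (ccpm_cocompact hM1) => K [[KC1 [Ksat Kcl]] hcov].
pose P y := K y /\ supnorm y = R1.
have [L1 [L10 hL1]] := lipschitz _ _ S1.
have [L2 [L20 hL2]] := lipschitz _ _ S2.
have [L3 [L30 hL3]] := lipschitz _ _ (S2 - S1).
set L := Rplus L1 L2.
have L0 : Rlt R0 L by rewrite /L; lra.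
have hrho : forall t, exists rho, Rlt R0 rho /\ (P t -> forall w,
    Rlt (supnorm (w - S1 *m t)) rho -> C2 w) /\ (P t -> forall w,
    Rlt (supnorm (w - S2 *m t)) rho -> C2 w).
  move=> t; case: (classic (P t)) => Pt; last first.
    by exists R1; split; [exact: Rlt_0_1 | split => /Pt].
  have C1t := KC1 _ (proj1 Pt).
  have [r1 [r10 h1]] := pcc_open hc2 (proj1 hS1 _ C1t).
  have [r2 [r20 h2]] := pcc_open hc2 (proj1 hS2 _ C1t).
  exists (Rmin r1 r2); split; first exact: Rmin_pos.
  split=> _ w hw.
    by apply: h1; apply: Rlt_le_trans hw _; apply: Rmin_l.
  by apply: h2; apply: Rlt_le_trans hw _; apply: Rmin_r.
pose rho t := proj1_sig (constructive_indefinite_description _ (hrho t)).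
have hr t : Rlt R0 (rho t) /\ (P t -> forall w,
    Rlt (supnorm (w - S1 *m t)) (rho t) -> C2 w) /\ (P t -> forall w,
    Rlt (supnorm (w - S2 *m t)) (rho t) -> C2 w).
  by rewrite /rho; case: constructive_indefinite_description.
pose r t := Rdiv (rho t) (Rmult (Rplus R1 R1) L).
have rpos : forall t, Rlt R0 (r t).
  move=> t; rewrite /r /Rdiv; apply: Rmult_lt_0_compat; first by case: (hr t).
  apply: Rinv_0_lt_compat; lra.
have Pcl : Defs.closed_set P.
  by move=> u l hu hl; apply: (Kcl u l hu hl).
have Pb : forall y, P y -> Rle (supnorm y) R1 by move=> y [_ ->]; apply: Rle_refl.
have [l hl] := ball_cover _ _ Pcl Pb _ rpos.
have hpos : forall t, Rlt R0 (Rdiv (rho t) (Rplus R1 R1)).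
  move=> t; rewrite /Rdiv; apply: Rmult_lt_0_compat; first by case: (hr t).
  apply: Rinv_0_lt_compat; lra.
have [eps [eps0 heps]] := list_min _ (fun t => Rdiv (rho t) (Rplus R1 R1)) l hpos.
have key : forall y, P y ->
   (forall w, Rlt (supnorm (w - S1 *m y)) eps -> C2 w) /\
   (forall w, Rlt (supnorm (w - S2 *m y)) eps -> C2 w).
  move=> y Py.
  have [t [tl [Pt hyt]]] := hl y Py.
  have [rt0 [ht1 ht2]] := hr t.
  have he := heps t tl.
  have hs0 := sn_ge0 _ (y - t).
  have hLr : Rle (Rmult L (supnorm (y - t))) (Rdiv (rho t) (Rplus R1 R1)).
    apply: (@Rle_trans _ (Rmult L (r t))).
      by apply: Rmult_le_compat_l; lra.
    rewrite /r /Rdiv; right; field; lra.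
  split => w hw.
    apply: (ht1 Pt); have e : w - S1 *m t = (w - S1 *m y) + S1 *m (y - t).
      by rewrite mulmxBr addrA subrK.
    rewrite e; apply: Rle_lt_trans (sn_triang _ _ _) _.
    have := hL1 (y - t).
    have : Rle (Rmult L1 (supnorm (y - t))) (Rmult L (supnorm (y - t))).
      by apply: Rmult_le_compat_r => //; rewrite /L; lra.
    lra.
  apply: (ht2 Pt); have e : w - S2 *m t = (w - S2 *m y) + S2 *m (y - t).
    by rewrite mulmxBr addrA subrK.
  rewrite e; apply: Rle_lt_trans (sn_triang _ _ _) _.
  have := hL2 (y - t).
  have : Rle (Rmult L2 (supnorm (y - t))) (Rmult L (supnorm (y - t))).
    by apply: Rmult_le_compat_r => //; rewrite /L; lra.
  lra.
set B := Rplus (ln (Rplus R1 (Rdiv (Rmult (Rplus R1 R1) L3) eps)))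
               (ln (Rplus R1 (Rdiv (Rmult (Rplus R1 R1) L3) eps))).
have B0 : Rle R0 B.
  have : Rle R0 (ln (Rplus R1 (Rdiv (Rmult (Rplus R1 R1) L3) eps))).
    apply: ln_ge0.
    have : Rle R0 (Rdiv (Rmult (Rplus R1 R1) L3) eps).
      rewrite /Rdiv; apply: Rmult_le_pos; first lra.
      by apply: Rlt_le; apply: Rinv_0_lt_compat.
    lra.
  rewrite /B; lra.
have bound : forall y, P y -> Rle (hilbert_dist C2 (S1 *m y) (S2 *m y)) B.
  move=> y Py; have [k1 k2] := key y Py.
  apply: hd_bound => //.
  have := hL3 y; rewrite mulmxBl (proj2 Py) Rmult_1_r; exact.
exists B; split => // x C1x.
have [g [y [gG [Ky gy]]]] := hcov x C1x.
have gL : Lambda C1 Gam1 g by apply: gen_base; left.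
have tL := proj1 htau g gL.
case: (eqVneq y 0) => [y0|y0].
  by rewrite -gy y0 !mulmx0 /hilbert_dist eqxx.
set lam := supnorm y.
have lam0 : Rlt R0 lam.
  case: (sn_ge0 _ y) => // /esym /sn_eq0 h; by rewrite h eqxx in y0.
have lamn0 : lam != 0 by apply/eqP => e; rewrite e in lam0; apply: (Rlt_irrefl R0).
set y' := lam^-1 *: y.
have Py' : P y'.
  split; first by apply: Ksat => //; rewrite RinvE; apply: Rinv_0_lt_compat.
  rewrite /y' sn_scale -/lam Rabs_right; last first.
    by apply: Rle_ge; apply: Rlt_le; rewrite RinvE; apply: Rinv_0_lt_compat.
  by rewrite -RmulE mulVf.
have yy : y = lam *: y' by rewrite /y' scalerA mulfV // scale1r.
have eS : forall S, Lin_tau C1 C2 (Lambda C1 Gam1) tau S ->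
    S *m x = (tau g *m lam%:M) *m (S *m y').
  move=> S [_ hS]; rewrite -gy mulmxA (hS _ gL); rewrite -!mulmxA yy; congr (_ *m _).
  by rewrite mul_scalar_mx scalemxAr.
rewrite (eS _ hS1) (eS _ hS2).
apply: hd_inv => //; last exact: bound.
move=> z; rewrite -mulmxA mul_scalar_mx (lam_inv _ _ _ hc2 _ tL).
exact: cone_iff.
Qed.
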